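(* Let $p$ be a prime, $A\in \mathbb{Z}^{m\times n}$, $b\in \mathbb{Z}^m$. If $\{x:Ax=b\}$ contains a $p$-adic point, then the $p$-adic points of $\{x:Ax=b\}$ form a dense subset of it. In particular, a nonempty rational polyhedron contains a $p$-adic point if, and only if, its affine hull contains a $p$-adic point.
   Context: A $p$-adic rational is a number $a/p^k$ with $a,k\in\mathbb{Z}$, $k\ge0$; a vector is $p$-adic if all entries are $p$-adic rationals. *)

(* Defs.v *)
From HB Require Import structures.
From mathcomp Require Import all_boot all_order all_algebra.
From mathcomp Require Import reals.
Set Implicit Arguments. Unset Strict Implicit. Unset Printing Implicit Defensive.
Import Order.TTheory GRing.Theory Num.Theory.
Local Open Scope ring_scope.

Definition padic_rat (R : realType) (p : nat) (r : R) : Prop :=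
  exists (a : int) (k : nat), r = a%:~R / (p%:R) ^+ k.

Definition padic_vec (R : realType) (p n : nat) (x : 'cV[R]_n) : Prop :=
  forall i : 'I_n, padic_rat p (x i ord0).

Definition affine_sol (R : realType) (m n : nat) (A : 'M[int]_(m, n))
  (b : 'cV[int]_m) (x : 'cV[R]_n) : Prop :=
  map_mx (fun z : int => z%:~R) A *m x = map_mx (fun z : int => z%:~R) b.

Definition in_polyhedron (R : realType) (k n : nat) (C : 'M[rat]_(k, n))
  (d : 'cV[rat]_k) (x : 'cV[R]_n) : Prop :=
  forall i : 'I_k, (map_mx (@ratr R) C *m x) i ord0 <= ratr (d i ord0).

Definition affine_hull (R : realType) (n : nat) (S : 'cV[R]_n -> Prop)
  (x : 'cV[R]_n) : Prop :=
  exists (k : nat) (pts : 'I_k -> 'cV[R]_n) (lam : 'I_k -> R),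
    (forall i, S (pts i)) /\ \sum_(i < k) lam i = 1 /\
    x = \sum_(i < k) lam i *: pts i.

(* Main.v *)
Require Import Defs.
From HB Require Import structures.
From mathcomp Require Import all_boot all_order all_algebra.
From mathcomp Require Import reals.
From mathcomp Require Import lra ring boolp.
Import Order.TTheory GRing.Theory Num.Theory.
Local Open Scope ring_scope.

Section Padic.
Variables (R : realType) (p : nat).
Hypothesis pp : prime p.

Lemma p_gt0 : (0 : R) < p%:R.
Proof. by rewrite ltr0n prime_gt0. Qed.

Lemma padic_int (z : int) : padic_rat p (z%:~R : R).
Proof. by exists z, 0%N; rewrite expr0 divr1. Qed.

Lemma padic_add (x y : R) : padic_rat p x -> padic_rat p y -> padic_rat p (x + y).
Proof.
move=> [a [k ->]] [a' [k' ->]].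
have hp := p_gt0.
exists (a * (p%:Z) ^+ k' + a' * (p%:Z) ^+ k), (k + k')%N.
have h1 : (p%:R ^+ k : R) != 0 by rewrite expf_neq0 // gt_eqF.
have h2 : (p%:R ^+ k' : R) != 0 by rewrite expf_neq0 // gt_eqF.
rewrite rmorphD !rmorphM !rmorphXn /= exprD.
field; by rewrite h1 h2.
Qed.

Lemma padic_mulz (z : int) (x : R) : padic_rat p x -> padic_rat p (z%:~R * x).
Proof.
move=> [a [k ->]]; exists (z * a), k; by rewrite rmorphM /= mulrA.
Qed.

Lemma padic_sum n (F : 'I_n -> R) : (forall j, padic_rat p (F j)) ->
  padic_rat p (\sum_j F j).
Proof.
move=> hF; apply: (big_ind (padic_rat p)) => //.
- by have := padic_int 0; rewrite mulr0z.
- by move=> ???; apply: padic_add.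
Qed.

Definition approx (k : nat) (t : R) : R :=
  (Num.floor (t * p%:R ^+ k))%:~R / p%:R ^+ k.

Lemma approx_padic k t : padic_rat p (approx k t).
Proof. by exists (Num.floor (t * p%:R ^+ k)), k. Qed.

Lemma approx_err k t : `|approx k t - t| < (p%:R ^+ k)^-1.
Proof.
have hp := p_gt0.
have pk0 : (0 : R) < p%:R ^+ k by rewrite exprn_gt0.
rewrite /approx; set f := Num.floor _.
have /andP [h1 h2] := floor_itv (t * p%:R ^+ k); rewrite -/f in h1 h2.
rewrite intrD in h2.
have -> : f%:~R / p%:R ^+ k - t = (f%:~R - t * p%:R ^+ k) / p%:R ^+ k.
  by field; rewrite gt_eqF.
rewrite normrM normfV (gtr0_norm pk0) -[X in _ < X]mul1r ltr_pM2r ?invr_gt0 //.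
rewrite ler0_norm ?subr_le0 //; lra.
Qed.

Lemma small_pow (d : R) : 0 < d -> exists k, (p%:R ^+ k : R)^-1 < d.
Proof.
move=> d0; have hp := p_gt0.
have hd : 0 <= d^-1 by rewrite invr_ge0 ltW.
have := archi_boundP hd.
set N := Num.Def.archi_bound _ => hN.
exists N.
rewrite invf_plt ?exprn_gt0 //.
apply: (lt_le_trans hN).
rewrite -natrX ler_nat; apply: ltnW; apply: ltn_expl.
  exact: prime_gt1.
by rewrite posrE exprn_gt0.
Qed.

End Padic.
Arguments p_gt0 {R p}.
Arguments padic_add {R p}.
Arguments padic_int {R}.
Arguments padic_mulz {R p}.
Arguments padic_sum {R p}.
Arguments approx {R} p k t.
Arguments approx_padic {R} p k t.
Arguments approx_err {R p}.
Arguments small_pow {R p}.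

Lemma exist_small (R : realType) n (g : 'I_n -> R) : (forall i, 0 < g i) ->
  exists e, 0 < e /\ forall i, e <= g i.
Proof.
move=> hg.
have s0 : 0 <= \sum_i (g i)^-1 by apply: sumr_ge0 => i _; rewrite invr_ge0 ltW.
exists (1 + \sum_i (g i)^-1)^-1; split; first by rewrite invr_gt0; lra.
move=> i; rewrite -[g i]invrK lef_pV2 ?posrE ?invr_gt0 //; last lra.
rewrite (bigD1 i) //=.
have : 0 <= \sum_(j | j != i) (g j)^-1 by apply: sumr_ge0 => j _; rewrite invr_ge0 ltW.
lra.
Qed.

Lemma common_den (I : finType) (f : I -> rat) :
  exists D : int, 0 < D /\ forall i, exists z : int, D%:~R * f i = z%:~R.
Proof.
exists (\prod_i denq (f i)); split; first by apply: prodr_gt0 => i _; exact: denq_gt0.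
move=> i; rewrite (bigD1 i) //=.
exists ((\prod_(j | j != i) denq (f j)) * numq (f i)).
by rewrite !rmorphM /= numqE; ring.
Qed.

Lemma dens (R : realType) p m n (A : 'M[rat]_(m,n)) (b : 'cV[rat]_m)
  (x0 x : 'cV[R]_n) (eps : R) :
  prime p -> map_mx ratr A *m x0 = map_mx ratr b -> padic_vec p x0 ->
  map_mx ratr A *m x = map_mx ratr b -> 0 < eps ->
  exists y, map_mx ratr A *m y = map_mx ratr b /\ padic_vec p y /\
    forall i, `|y i ord0 - x i ord0| < eps.
Proof.
move=> pp h0 px0 hx eps0.
have hp := @p_gt0 R p pp.
have hv : map_mx ratr A *m (x - x0) = 0 by rewrite mulmxBr hx h0 subrr.
have : ((x - x0)^T <= kermx (map_mx ratr A)^T)%MS.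
  by apply/sub_kermxP; rewrite -trmx_mul hv trmx0.
rewrite map_trmx -map_kermx => /submxP [D hD].
set K := (kermx A^T)^T.
have hxK : x = x0 + map_mx ratr K *m D^T.
  by rewrite /K -map_trmx -trmx_mul -hD trmxK addrC subrK.
have AK : A *m K = 0.
  have : (kermx A^T *m A^T)^T = 0 by rewrite mulmx_ker trmx0.
  by rewrite trmx_mul trmxK.
clearbody K.
have [Dn [Dn0 hDn]] := @common_den _ (fun ij : 'I_n * 'I_n => K ij.1 ij.2).
set S := fun i => \sum_j `|ratr (K i j) : R|.
have S0 : forall i, 0 <= S i by move=> i; apply: sumr_ge0 => j _.
set DR : R := Dn%:~R.
have DR0 : 0 < DR by rewrite ltr0z.
have hg : forall i, 0 < eps / (DR * (1 + S i)).
  move=> i; apply: divr_gt0 => //; apply: mulr_gt0 => //; have := S0 i; lra.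
have [del [del0 hdel]] := @exist_small R n _ hg.
have [k hk] := small_pow pp _ del0.
set w' : 'cV[R]_n := \col_j approx p k (D ord0 j / DR).
exists (x0 + map_mx ratr K *m (DR *: w')).
split.
  by rewrite mulmxDr h0 mulmxA -map_mxM AK map_mx0 mul0mx addr0.
split.
  move=> i; rewrite !mxE; apply: (padic_add pp); first exact: px0.
  apply: (padic_sum pp) => j.
  have [z hz] := hDn (i, j).
  have hDR : DR = ratr (Dn%:~R : rat) by rewrite rmorph_int.
  rewrite !mxE /= mulrA [ratr _ * DR]mulrC hDR -rmorphM /= hz rmorph_int.
  by apply: padic_mulz; apply: approx_padic.
move=> i.
have -> : forall y : 'cV[R]_n, y i ord0 - x i ord0 = (y - x) i ord0 by move=> y; rewrite !mxE.
rewrite [in _ - x]hxK.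
have -> : x0 + map_mx ratr K *m (DR *: w') - (x0 + map_mx ratr K *m D^T) =
   map_mx ratr K *m (DR *: w' - D^T) by rewrite mulmxBr opprD addrACA subrr add0r.
rewrite mxE.
apply: (le_lt_trans (ler_norm_sum _ _ _)).
apply: (@le_lt_trans _ _ (S i * (DR * del))).
  rewrite /S mulr_suml; apply: ler_sum => j _.
  rewrite normrM [(K ^ ratr)%sesqui i j]mxE ler_wpM2l //.
  rewrite !mxE.
  have -> : DR * approx p k (D ord0 j / DR) - D ord0 j =
     DR * (approx p k (D ord0 j / DR) - D ord0 j / DR).
    by field; rewrite gt_eqF.
  rewrite normrM (gtr0_norm DR0) ler_wpM2l ?ltW //.
  exact: (lt_trans (approx_err pp _ _) hk).
have := hdel i; rewrite ler_pdivlMr; last first.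
  apply: mulr_gt0 => //; have := S0 i; lra.
have := S0 i.
have : 0 < DR * del by apply: mulr_gt0.
nra.
Qed.

Lemma map_int_rat (R : realType) m n (M : 'M[int]_(m, n)) :
  map_mx (@ratr R) (map_mx (fun z : int => z%:~R : rat) M) =
  map_mx (fun z : int => z%:~R) M.
Proof. by apply/matrixP => i j; rewrite !mxE rmorph_int. Qed.

Theorem lemma2p2 (R : realType) (p m n : nat) (A : 'M[int]_(m, n))
    (b : 'cV[int]_m) :
  prime p ->
  ((exists x : 'cV[R]_n, affine_sol A b x /\ padic_vec p x) ->
   forall x : 'cV[R]_n, affine_sol A b x ->
   forall eps : R, 0 < eps ->
   exists y : 'cV[R]_n, affine_sol A b y /\ padic_vec p y /\
     forall i : 'I_n, `|y i ord0 - x i ord0| < eps)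
  /\
  (forall (k : nat) (C : 'M[rat]_(k, n)) (d : 'cV[rat]_k),
   (exists x : 'cV[R]_n, in_polyhedron C d x) ->
   ((exists x : 'cV[R]_n, in_polyhedron C d x /\ padic_vec p x) <->
    (exists x : 'cV[R]_n, affine_hull (in_polyhedron C d) x /\ padic_vec p x))).
Proof.
move=> pp; split.
  move=> [x0 [h0 px0]] x hx eps eps0.
  rewrite /affine_sol -!map_int_rat in h0 hx *.
  exact: dens R p _ _ _ _ _ _ _ pp h0 px0 hx eps0.
move=> k C d [xP hxP]; split.
  move=> [x [hx px]]; exists x; split => //.
  exists 1%N, (fun _ => x), (fun _ => 1); split; first by [].
  by rewrite !big_ord1 scale1r.
move=> [x [[l [pts [lam [hpts [hlam hxl]]]]] px]].
move: hpts; case: k C d hxP => [|k] C d hxP hpts.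
  by exists x; split => // -[].
set CR := map_mx (@ratr R) C.
pose inI := fun i : 'I_k.+1 => `[< forall z : 'cV[R]_n, in_polyhedron C d z ->
   (CR *m z) i ord0 = ratr (d i ord0) >].
have hz : forall i, exists z, in_polyhedron C d z /\
    (inI i \/ (CR *m z) i ord0 < ratr (d i ord0)).
  move=> i; case: (boolP (inI i)) => h; first by exists xP; split => //; left.
  have : ~ (forall z, in_polyhedron C d z -> (CR *m z) i ord0 = ratr (d i ord0)).
    by move=> H; move/negP: h; apply; apply/asboolP.
  move/existsPNP => [z hzP hne]; exists z; split => //; right.
  by rewrite lt_neqAle hzP andbT; apply/eqP.
have [zf hzf] := choice hz.
set c : 'cV[R]_n := (k.+1%:R)^-1 *: \sum_j zf j.
have hCc : forall i, (CR *m c) i ord0 = (k.+1%:R)^-1 * \sum_j (CR *m zf j) i ord0.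
  move=> i; rewrite /c -scalemxAr mulmx_sumr mxE summxE //.
clearbody c.
have k0 : (0 : R) < k.+1%:R by rewrite ltr0n.
have hc : forall i, (CR *m c) i ord0 <= ratr (d i ord0) /\
   (~~ inI i -> (CR *m c) i ord0 < ratr (d i ord0)).
  move=> i; rewrite hCc.
  have hle : forall j, (CR *m zf j) i ord0 <= ratr (d i ord0).
    by move=> j; case: (hzf j) => H _; exact: H.
  have hs : \sum_j (CR *m zf j) i ord0 <= \sum_(j < k.+1) ratr (d i ord0).
    by apply: ler_sum => j _.
  rewrite sumr_const card_ord in hs.
  split.
    by rewrite ler_pdivrMl // mulr_natl.
  move=> hni.
  have hi : (CR *m zf i) i ord0 < ratr (d i ord0).
    by case: (hzf i) => _ [H|//]; rewrite H in hni.
  rewrite ltr_pdivrMl // mulr_natl.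
  rewrite (bigD1 i) //= mulrSr [_ *+ k + _]addrC; apply: ltr_leD => //.
  apply: (@le_trans _ _ (\sum_(j < k.+1 | j != i) ratr (d i ord0))).
    by apply: ler_sum => j _.
  by rewrite sumr_const cardC1 card_ord.
set S := fun i => \sum_j `|CR i j|.
have S0 : forall i, 0 <= S i by move=> i; apply: sumr_ge0 => j _.
have hg : forall i, 0 < (if inI i then 1 else
    (ratr (d i ord0) - (CR *m c) i ord0) / (1 + S i)).
  move=> i; case: ifP => // /negbT hni; apply: divr_gt0.
    by have := (hc i).2 hni; rewrite subr_gt0.
  by have := S0 i; lra.
have [e [e0 he]] := @exist_small R k.+1 _ hg.
pose C' : 'M[rat]_(k.+1, n) := \matrix_(i, j) (if inI i then C i j else 0).
pose d' : 'cV[rat]_k.+1 := \col_i (if inI i then d i ord0 else 0).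
have hC' : forall (y : 'cV[R]_n) i, (map_mx ratr C' *m y) i ord0 =
    if inI i then (CR *m y) i ord0 else 0.
  move=> y i; rewrite !mxE; case: ifP => hI.
    by apply: eq_bigr => j _; rewrite !mxE hI.
  by rewrite big1 // => j _; rewrite !mxE hI rmorph0 mul0r.
have hd' : forall i, map_mx (@ratr R) d' i ord0 = if inI i then ratr (d i ord0) else 0.
  by move=> i; rewrite !mxE; case: ifP => //; rewrite rmorph0.
have inIP : forall i z, inI i -> in_polyhedron C d z ->
    (CR *m z) i ord0 = ratr (d i ord0).
  by move=> i z /asboolP H; apply: H.
have solx : map_mx ratr C' *m x = map_mx ratr d'.
  apply/matrixP => i j; rewrite (ord1 j) hC' hd'; case: ifP => // hI.
  rewrite hxl mulmx_sumr summxE.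
  under eq_bigr => q _ do rewrite -scalemxAr mxE (inIP i _ hI (hpts q)).
  by rewrite -mulr_suml hlam mul1r.
have cP : in_polyhedron C d c by move=> i; exact: (hc i).1.
have solc : map_mx ratr C' *m c = map_mx ratr d'.
  apply/matrixP => i j; rewrite (ord1 j) hC' hd'; case: ifP => // hI.
  exact: inIP.
have [y [soly [py hy]]] := dens R p _ _ _ _ _ _ _ pp solx px solc e0.
exists y; split => //.
move=> i; case hI: (inI i).
  move/matrixP: soly => /(_ i ord0); rewrite hC' hd' hI => ->.
  by [].
have hni : ~~ inI i by rewrite hI.
have := he i; rewrite hI => hei.
have gap := (hc i).2 hni.
have eS : e * (1 + S i) <= ratr (d i ord0) - (CR *m c) i ord0.
  by rewrite -ler_pdivlMr //; have := S0 i; lra.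
have hb : `|(CR *m (y - c)) i ord0| <= S i * e.
  rewrite mxE; apply: (le_trans (ler_norm_sum _ _ _)).
  rewrite /S mulr_suml; apply: ler_sum => j _.
  rewrite normrM ler_wpM2l // !mxE; exact: ltW (hy j).
have : (CR *m y) i ord0 = (CR *m c) i ord0 + (CR *m (y - c)) i ord0.
  rewrite mulmxBr; set u := CR *m y; set v := CR *m c.
  by rewrite !mxE [_ + (_ - _)]addrC subrK.
move=> ->.
have := ler_norm ((CR *m (y - c)) i ord0).
have := S0 i.
nra.
Qed.
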